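(* Let $n,m\ge 1$ be integers and consider the shifting-checkers game with $n$ black and $m$ white checkers (defined in the context). Every optimal solution of the game (i.e. every move sequence from the initial configuration to the final configuration using the minimum possible number of moves) uses only the following four kinds of moves: (1) a black checker slides one position to the right into the vacancy; (2) a white checker slides one position to the left into the vacancy; (3) a black checker jumps to the right over an adjacent white checker into the vacancy; (4) a white checker jumps to the left over an adjacent black checker into the vacancy.
   Context: The game: there are $n+m+1$ positions in a row, numbered $1,\dots,n+m+1$. A configuration assigns to each position a black checker, a white checker, or nothing, with exactly one empty position (the vacancy). Writing $b$ for black, $w$ for white and $O$ for the vacancy, the initial configuration is $b^nOw^m$ (blacks at $1,\dots,n$, vacancy at $n+1$, whites at $n+2,\dots,n+m+1$) and the final configuration is $w^mOb^n$. A move is either a slide (a checker at a position adjacent to the vacancy moves into the vacancy) or a jump (a checker at distance two from the vacancy jumps over the checker between them into the vacancy); moves in either direction and over checkers of either colour are permitted. A solution is a finite sequence of moves transforming the initial configuration into the final one; it is optimal if no solution has fewer moves. *)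

(* Defs.v *)
From HB Require Import structures.
From mathcomp Require Import all_boot.
Set Implicit Arguments. Unset Strict Implicit. Unset Printing Implicit Defensive.

(* Cells of the board. Positions 1..n+m+1 of the paper are represented by
   indices 0..n+m of a sequence. *)
Inductive cell := Black | White | Empty.

Definition cell_eqb (a b : cell) : bool :=
  match a, b with
  | Black, Black | White, White | Empty, Empty => true
  | _, _ => false end.
Lemma cell_eqP : Equality.axiom cell_eqb.
Proof. by case; case; constructor. Qed.
HB.instance Definition _ := hasDecEq.Build cell cell_eqP.

Definition config := seq cell.

Definition init_config (n m : nat) : config := nseq n Black ++ Empty :: nseq m White.
Definition final_config (n m : nat) : config := nseq m White ++ Empty :: nseq n Black.

Record move := Move { src : nat; dst : nat }.

Definition dist (a b : nat) : nat := (a - b) + (b - a).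

Definition legal (c : config) (mv : move) : Prop :=
  src mv < size c /\ dst mv < size c /\
  nth Empty c (dst mv) = Empty /\ nth Empty c (src mv) <> Empty /\
  (dist (src mv) (dst mv) = 1 \/
   (dist (src mv) (dst mv) = 2 /\
    nth Empty c ((src mv + dst mv) %/ 2) <> Empty)).

Definition apply_move (c : config) (mv : move) : config :=
  set_nth Empty (set_nth Empty c (dst mv) (nth Empty c (src mv))) (src mv) Empty.

Fixpoint runs (c : config) (ms : seq move) (c' : config) : Prop :=
  match ms with
  | [::] => c = c'
  | mv :: ms' => legal c mv /\ runs (apply_move c mv) ms' c'
  end.

Definition solution (n m : nat) (ms : seq move) : Prop :=
  runs (init_config n m) ms (final_config n m).

Definition optimal_solution (n m : nat) (ms : seq move) : Prop :=
  solution n m ms /\ forall ms', solution n m ms' -> size ms <= size ms'.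

Definition allowed_kind (c : config) (mv : move) : Prop :=
  (nth Empty c (src mv) = Black /\ dst mv = (src mv).+1) \/
  (nth Empty c (src mv) = White /\ src mv = (dst mv).+1) \/
  (nth Empty c (src mv) = Black /\ dst mv = (src mv).+2 /\
   nth Empty c (src mv).+1 = White) \/
  (nth Empty c (src mv) = White /\ src mv = (dst mv).+2 /\
   nth Empty c (dst mv).+1 = Black).

Fixpoint all_allowed (c : config) (ms : seq move) : Prop :=
  match ms with
  | [::] => True
  | mv :: ms' => allowed_kind c mv /\ all_allowed (apply_move c mv) ms'
  end.

(* Main.v *)
Require Import Defs.
From mathcomp Require Import all_boot zify.
Set Implicit Arguments. Unset Strict Implicit. Unset Printing Implicit Defensive.

Lemma set_nth_catr (X Z : seq cell) k y :
  set_nth Empty (X ++ Z) (size X + k) y = X ++ set_nth Empty Z k y.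
Proof. by elim: X => //= x X IH; rewrite IH. Qed.

Lemma nth_catr (X Z : seq cell) k :
  nth Empty (X ++ Z) (size X + k) = nth Empty Z k.
Proof. by rewrite nth_cat ltnNge leq_addr /= addKn. Qed.

Lemma nseqSr (T : Type) (x : T) a : nseq a.+1 x = nseq a x ++ [:: x].
Proof. by elim: a => //= a <-. Qed.

Fixpoint alt (x y : cell) i : seq cell := if i is i'.+1 then x :: y :: alt x y i' else [::].

Lemma alt_rcons x y i : alt x y i ++ [:: x; y] = alt x y i.+1.
Proof. by elim: i => //= i ->. Qed.

Lemma alt_r1 x y i : alt x y i ++ [:: x] = x :: alt y x i.
Proof. by elim: i => //= i ->. Qed.

Lemma alt_l1 x y i : x :: (alt y x i ++ [:: y]) = alt x y i.+1.
Proof. by rewrite alt_r1. Qed.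

Fixpoint invc (c : config) : nat :=
  if c is x :: c' then (x == Black) * count_mem White c' + invc c' else 0.

Fixpoint xi (c : config) : nat :=
  if c is x :: c' then (if x == Empty then count_mem White c' else (x == Black) + xi c') else 0.

Lemma invc_cat X Z : invc (X ++ Z) = invc X + invc Z + count_mem Black X * count_mem White Z.
Proof.
elim: X => [|x X IH] /=; first by rewrite add0n addn0.
rewrite IH count_cat mulnDr mulnDl.
set p := (x == Black) * _; set q := (x == Black) * _; set r := count_mem _ X * _; lia.
Qed.

Lemma xi_cat X Z : Empty \notin X -> xi (X ++ Z) = count_mem Black X + xi Z.
Proof.
elim: X => [|x X IH] //= ; rewrite inE negb_or => /andP [xE XE].
by rewrite eq_sym (negbTE xE) IH // addnA.
Qed.

Lemma nth_at (X Z : seq cell) : nth Empty (X ++ Z) (size X) = nth Empty Z 0.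
Proof. by rewrite -{1}(addn0 (size X)) nth_catr. Qed.
Lemma set_at (X Z : seq cell) y : set_nth Empty (X ++ Z) (size X) y = X ++ set_nth Empty Z 0 y.
Proof. by rewrite -{1}(addn0 (size X)) set_nth_catr. Qed.
Lemma nth_at1 (X Z : seq cell) : nth Empty (X ++ Z) (size X).+1 = nth Empty Z 1.
Proof. by rewrite -addn1 nth_catr. Qed.
Lemma set_at1 (X Z : seq cell) y : set_nth Empty (X ++ Z) (size X).+1 y = X ++ set_nth Empty Z 1 y.
Proof. by rewrite -addn1 set_nth_catr. Qed.
Lemma nth_at2 (X Z : seq cell) : nth Empty (X ++ Z) (size X).+2 = nth Empty Z 2.
Proof. by rewrite -addn2 nth_catr. Qed.
Lemma set_at2 (X Z : seq cell) y : set_nth Empty (X ++ Z) (size X).+2 y = X ++ set_nth Empty Z 2 y.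
Proof. by rewrite -addn2 set_nth_catr. Qed.

Lemma slideR_ok X Y a : a != Empty ->
  legal (X ++ [:: a; Empty] ++ Y) (Move (size X) (size X).+1) /\
  apply_move (X ++ [:: a; Empty] ++ Y) (Move (size X) (size X).+1) = X ++ [:: Empty; a] ++ Y.
Proof.
move=> aE; rewrite /legal /apply_move /= nth_at nth_at1 set_at1 set_at /=.
rewrite size_cat /= /dist; split; last by [].
split; first lia. split; first lia. split; first by []. split; first by apply/eqP.
left; lia.
Qed.

Lemma slideL_ok X Y a : a != Empty ->
  legal (X ++ [:: Empty; a] ++ Y) (Move (size X).+1 (size X)) /\
  apply_move (X ++ [:: Empty; a] ++ Y) (Move (size X).+1 (size X)) = X ++ [:: a; Empty] ++ Y.
Proof.
move=> aE; rewrite /legal /apply_move /= nth_at nth_at1 set_at set_at1 /=.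
rewrite size_cat /= /dist; split; last by [].
split; first lia. split; first lia. split; first by []. split; first by apply/eqP.
left; lia.
Qed.

Lemma mid2 k : (k + k.+2) %/ 2 = k.+1.
Proof. have -> : k + k.+2 = k.+1 * 2 by lia. by rewrite mulnK. Qed.
Lemma mid2' k : (k.+2 + k) %/ 2 = k.+1.
Proof. by rewrite addnC mid2. Qed.

Lemma jumpR_ok X Y a b : a != Empty -> b != Empty ->
  legal (X ++ [:: a; b; Empty] ++ Y) (Move (size X) (size X).+2) /\
  apply_move (X ++ [:: a; b; Empty] ++ Y) (Move (size X) (size X).+2) = X ++ [:: Empty; b; a] ++ Y.
Proof.
move=> aE bE; rewrite /legal /apply_move /= mid2 nth_at nth_at1 nth_at2 set_at2 set_at /=.
rewrite size_cat /= /dist; split; last by [].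
split; first lia. split; first lia. split; first by []. split; first by apply/eqP.
right; split; first lia. by apply/eqP.
Qed.

Lemma jumpL_ok X Y a b : a != Empty -> b != Empty ->
  legal (X ++ [:: Empty; b; a] ++ Y) (Move (size X).+2 (size X)) /\
  apply_move (X ++ [:: Empty; b; a] ++ Y) (Move (size X).+2 (size X)) = X ++ [:: a; b; Empty] ++ Y.
Proof.
move=> aE bE; rewrite /legal /apply_move /= mid2' nth_at nth_at1 nth_at2 set_at set_at2 /=.
rewrite size_cat /= /dist; split; last by [].
split; first lia. split; first lia. split; first by []. split; first by apply/eqP.
right; split; first lia. by apply/eqP.
Qed.

Inductive mshape (c : config) (mv : move) : Prop :=
| MSR X Y a : a != Empty -> Empty \notin X -> Empty \notin Y ->
    c = X ++ [:: a; Empty] ++ Y -> mv = Move (size X) (size X).+1 -> mshape c mv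
| MSL X Y a : a != Empty -> Empty \notin X -> Empty \notin Y ->
    c = X ++ [:: Empty; a] ++ Y -> mv = Move (size X).+1 (size X) -> mshape c mv
| MJR X Y a b : a != Empty -> b != Empty -> Empty \notin X -> Empty \notin Y ->
    c = X ++ [:: a; b; Empty] ++ Y -> mv = Move (size X) (size X).+2 -> mshape c mv
| MJL X Y a b : a != Empty -> b != Empty -> Empty \notin X -> Empty \notin Y ->
    c = X ++ [:: Empty; b; a] ++ Y -> mv = Move (size X).+2 (size X) -> mshape c mv.

Lemma split2 (c : config) k : k.+1 < size c ->
  c = take k c ++ [:: nth Empty c k; nth Empty c k.+1] ++ drop k.+2 c.
Proof.
move=> h; rewrite -{1}(cat_take_drop k c) (drop_nth Empty) ?(drop_nth Empty (n:=k.+1)) //; lia.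
Qed.

Lemma split3 (c : config) k : k.+2 < size c ->
  c = take k c ++ [:: nth Empty c k; nth Empty c k.+1; nth Empty c k.+2] ++ drop k.+3 c.
Proof.
move=> h; rewrite -{1}(cat_take_drop k c) (drop_nth Empty) ?(drop_nth Empty (n:=k.+1))
  ?(drop_nth Empty (n:=k.+2)) //; lia.
Qed.

Lemma cnt1 (X Y L : config) : count_mem Empty (X ++ L ++ Y) = 1 -> count_mem Empty L = 1 ->
  Empty \notin X /\ Empty \notin Y.
Proof.
rewrite !count_cat => h1 h2; split; apply/count_memPn; lia.
Qed.

Lemma decomp c mv : count_mem Empty c = 1 -> legal c mv -> mshape c mv.
Proof.
case: mv => s d hc [/= hs [/= hd [/= hE [/= hs' hdist]]]].
have sd : (s - d) + (d - s) = 1 \/ ((s - d) + (d - s) = 2 /\ nth Empty c ((s + d) %/ 2) <> Empty)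
  by exact: hdist.
clear hdist.
have aE : nth Empty c s != Empty by apply/eqP.
case: sd => [h1 | [h2 hm]].
- have [e|e] : d = s.+1 \/ s = d.+1 by clear -h1; lia.
  + subst d. have sz : size (take s c) = s by rewrite size_takel // ltnW // ltnW.
    have ec := split2 hd. rewrite hE in ec.
    have cL : count_mem Empty [:: nth Empty c s; Empty] = 1 by rewrite /= (negbTE aE).
    have hc' := hc; rewrite ec in hc'. have [nX nY] := cnt1 hc' cL.
    by apply: (MSR aE nX nY ec); rewrite sz.
  + subst s. have sz : size (take d c) = d by rewrite size_takel // ltnW // ltnW.
    have ec := split2 hs. rewrite hE in ec.
    have cL : count_mem Empty [:: Empty; nth Empty c d.+1] = 1 by rewrite /= (negbTE aE).
    have hc' := hc; rewrite ec in hc'. have [nX nY] := cnt1 hc' cL.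
    by apply: (MSL aE nX nY ec); rewrite sz.
- have [e|e] : d = s.+2 \/ s = d.+2 by clear -h2; lia.
  + subst d. rewrite mid2 in hm. have bE : nth Empty c s.+1 != Empty by apply/eqP.
    have sz : size (take s c) = s by rewrite size_takel // ltnW // ltnW.
    have ec := split3 hd. rewrite hE in ec.
    have cL : count_mem Empty [:: nth Empty c s; nth Empty c s.+1; Empty] = 1
      by rewrite /= (negbTE aE) (negbTE bE).
    have hc' := hc; rewrite ec in hc'. have [nX nY] := cnt1 hc' cL.
    by apply: (MJR aE bE nX nY ec); rewrite sz.
  + subst s. rewrite mid2' in hm. have bE : nth Empty c d.+1 != Empty by apply/eqP.
    have sz : size (take d c) = d by rewrite size_takel // ltnW // ltnW.
    have ec := split3 hs. rewrite hE in ec.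
    have cL : count_mem Empty [:: Empty; nth Empty c d.+1; nth Empty c d.+2] = 1
      by rewrite /= (negbTE aE) (negbTE bE).
    have hc' := hc; rewrite ec in hc'. have [nX nY] := cnt1 hc' cL.
    by apply: (MJL aE bE nX nY ec); rewrite sz.
Qed.

Definition allowedb (c : config) (mv : move) : bool :=
  [|| (nth Empty c (src mv) == Black) && (dst mv == (src mv).+1),
      (nth Empty c (src mv) == White) && (src mv == (dst mv).+1),
      [&& nth Empty c (src mv) == Black, dst mv == (src mv).+2 & nth Empty c (src mv).+1 == White] |
      [&& nth Empty c (src mv) == White, src mv == (dst mv).+2 & nth Empty c (dst mv).+1 == Black]].

Lemma allowedbP c mv : allowedb c mv -> allowed_kind c mv.
Proof.
rewrite /allowedb /allowed_kind.
case/or4P => [/andP [/eqP h1 /eqP h2] | /andP [/eqP h1 /eqP h2]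
  | /and3P [/eqP h1 /eqP h2 /eqP h3] | /and3P [/eqP h1 /eqP h2 /eqP h3]]; tauto.
Qed.

Lemma ak_SR X Y a : allowed_kind (X ++ [:: a; Empty] ++ Y) (Move (size X) (size X).+1) -> a = Black.
Proof.
rewrite /allowed_kind /=; case=> [[h _]|[[_ h]|[[_ [h _]]|[_ [h _]]]]]; try lia.
by rewrite nth_at in h.
Qed.
Lemma ak_SL X Y a : allowed_kind (X ++ [:: Empty; a] ++ Y) (Move (size X).+1 (size X)) -> a = White.
Proof.
rewrite /allowed_kind /=; case=> [[_ h]|[[h _]|[[_ [h _]]|[_ [h _]]]]]; try lia.
by rewrite nth_at1 in h.
Qed.
Lemma ak_JR X Y a b : allowed_kind (X ++ [:: a; b; Empty] ++ Y) (Move (size X) (size X).+2) ->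
  a = Black /\ b = White.
Proof.
rewrite /allowed_kind /=; case=> [[_ h]|[[_ h]|[[h1 [_ h2]]|[_ [h _]]]]]; try lia.
by rewrite nth_at in h1; rewrite nth_at1 in h2.
Qed.
Lemma ak_JL X Y a b : allowed_kind (X ++ [:: Empty; b; a] ++ Y) (Move (size X).+2 (size X)) ->
  a = White /\ b = Black.
Proof.
rewrite /allowed_kind /=; case=> [[_ h]|[[_ h]|[[_ [h _]]|[h1 [_ h2]]]]]; try lia.
by rewrite nth_at2 in h1; rewrite nth_at1 in h2.
Qed.

Lemma ab_SR X Y : allowedb (X ++ [:: Black; Empty] ++ Y) (Move (size X) (size X).+1).
Proof. by rewrite /allowedb /= nth_at /= !eqxx. Qed.
Lemma ab_SL X Y : allowedb (X ++ [:: Empty; White] ++ Y) (Move (size X).+1 (size X)).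
Proof. by apply/or4P; constructor 2; rewrite /= nth_at1 /= !eqxx. Qed.
Lemma ab_JR X Y : allowedb (X ++ [:: Black; White; Empty] ++ Y) (Move (size X) (size X).+2).
Proof. by apply/or4P; constructor 3; rewrite /= nth_at nth_at1 /= !eqxx. Qed.
Lemma ab_JL X Y : allowedb (X ++ [:: Empty; Black; White] ++ Y) (Move (size X).+2 (size X)).
Proof. by apply/or4P; constructor 4; rewrite /= nth_at2 nth_at1 /= !eqxx. Qed.

Definition isslide (mv : move) : bool := dist (src mv) (dst mv) == 1.

Lemma ncolE (a : cell) : a != Empty -> a = Black \/ a = White.
Proof. by case: a; auto. Qed.

Definition facts (c : config) (mv : move) (c' : config) :=
  [/\ forall x, count_mem x c' = count_mem x c,
      4 * invc c + xi c + 3 * isslide mv + ~~ allowedb c mv <= 4 + 4 * invc c' + xi c' &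
      allowedb c mv -> invc c' + xi c' + 1 = invc c + xi c].

Lemma facts_SR X Y a : a != Empty -> Empty \notin X ->
  facts (X ++ [:: a; Empty] ++ Y) (Move (size X) (size X).+1) (X ++ [:: Empty; a] ++ Y).
Proof.
move=> aE nX.
have sl : isslide (Move (size X) (size X).+1) by rewrite /isslide /dist /=; apply/eqP; lia.
split.
- by move=> x; rewrite !count_cat /= !addn0 (addnC (Empty == x)).
- have hb := leq_b1 (~~ allowedb (X ++ [:: a; Empty] ++ Y) (Move (size X) (size X).+1)).
  case: (ncolE aE) => ea; subst a.
  + rewrite ab_SR sl !invc_cat !(xi_cat _ nX) /=; nia.
  + move: hb; set q := nat_of_bool _ => hb. rewrite sl !invc_cat !(xi_cat _ nX) /=; nia.
- move/allowedbP/ak_SR => ->; rewrite !invc_cat !(xi_cat _ nX) /=; nia.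
Qed.

Lemma facts_SL X Y a : a != Empty -> Empty \notin X ->
  facts (X ++ [:: Empty; a] ++ Y) (Move (size X).+1 (size X)) (X ++ [:: a; Empty] ++ Y).
Proof.
move=> aE nX.
have sl : isslide (Move (size X).+1 (size X)) by rewrite /isslide /dist /=; apply/eqP; lia.
split.
- by move=> x; rewrite !count_cat /= !addn0 (addnC (Empty == x)).
- have hb := leq_b1 (~~ allowedb (X ++ [:: Empty; a] ++ Y) (Move (size X).+1 (size X))).
  case: (ncolE aE) => ea; subst a.
  + move: hb; set q := nat_of_bool _ => hb. rewrite sl !invc_cat !(xi_cat _ nX) /=; nia.
  + rewrite ab_SL sl !invc_cat !(xi_cat _ nX) /=; nia.
- move/allowedbP/ak_SL => ->; rewrite !invc_cat !(xi_cat _ nX) /=; nia.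
Qed.

Lemma facts_JR X Y a b : a != Empty -> b != Empty -> Empty \notin X ->
  facts (X ++ [:: a; b; Empty] ++ Y) (Move (size X) (size X).+2) (X ++ [:: Empty; b; a] ++ Y).
Proof.
move=> aE bE nX.
have sl : isslide (Move (size X) (size X).+2) = false by rewrite /isslide /dist /=; apply/eqP; lia.
split.
- move=> x; rewrite !count_cat /= !addn0.
  by rewrite (addnC (Empty == x)) -!addnA (addnCA (b == x)) (addnC (Empty == x)).
- have hb := leq_b1 (~~ allowedb (X ++ [:: a; b; Empty] ++ Y) (Move (size X) (size X).+2)).
  case: (ncolE aE) => ea; case: (ncolE bE) => eb; subst a b;
    try (move: hb; set q := nat_of_bool _ => hb; rewrite sl !invc_cat !(xi_cat _ nX) /=; nia).
  rewrite ab_JR sl !invc_cat !(xi_cat _ nX) /=; nia.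
- by move/allowedbP/ak_JR => [-> ->]; rewrite !invc_cat !(xi_cat _ nX) /=; nia.
Qed.

Lemma facts_JL X Y a b : a != Empty -> b != Empty -> Empty \notin X ->
  facts (X ++ [:: Empty; b; a] ++ Y) (Move (size X).+2 (size X)) (X ++ [:: a; b; Empty] ++ Y).
Proof.
move=> aE bE nX.
have sl : isslide (Move (size X).+2 (size X)) = false by rewrite /isslide /dist /=; apply/eqP; lia.
split.
- move=> x; rewrite !count_cat /= !addn0.
  by rewrite (addnC (a == x)) -!addnA (addnCA (b == x)) (addnC (a == x)).
- have hb := leq_b1 (~~ allowedb (X ++ [:: Empty; b; a] ++ Y) (Move (size X).+2 (size X))).
  case: (ncolE aE) => ea; case: (ncolE bE) => eb; subst a b;
    try (move: hb; set q := nat_of_bool _ => hb; rewrite sl !invc_cat !(xi_cat _ nX) /=; nia).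
  rewrite ab_JL sl !invc_cat !(xi_cat _ nX) /=; nia.
- by move/allowedbP/ak_JL => [-> ->]; rewrite !invc_cat !(xi_cat _ nX) /=; nia.
Qed.

Lemma step_facts c mv : count_mem Empty c = 1 -> legal c mv -> facts c mv (apply_move c mv).
Proof.
move=> hc hl; case: (decomp hc hl) => [X Y a aE nX nY ec em | X Y a aE nX nY ec em
  | X Y a b aE bE nX nY ec em | X Y a b aE bE nX nY ec em]; subst c mv.
- by have [_ ->] := slideR_ok X Y aE; apply: facts_SR.
- by have [_ ->] := slideL_ok X Y aE; apply: facts_SL.
- by have [_ ->] := jumpR_ok X Y aE bE; apply: facts_JR.
- by have [_ ->] := jumpL_ok X Y aE bE; apply: facts_JL.
Qed.

Definition str (c : config) : config := filter (fun x => x != Empty) c.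

Definition kk n t i := i.+1 + (t + i.+1 - n).

Definition Inv n t (c : config) :=
  (index Empty c + n + t) %% 2 = 0 /\
  forall i, i < n -> i < count_mem Black (take (kk n t i) (str c)).

Lemma str_free (X : config) : Empty \notin X -> str X = X.
Proof.
move=> h; apply/all_filterP/allP => x xX; apply/eqP => e; subst x; by rewrite xX in h.
Qed.

Lemma take_swap_count (X Y : config) p q k x : k != (size X).+1 ->
  count_mem x (take k (X ++ [:: p; q] ++ Y)) = count_mem x (take k (X ++ [:: q; p] ++ Y)).
Proof.
move=> hk; rewrite !take_cat; case: ifP => // _.
case e: (k - size X) => [|[|j]] //=.
- move: hk; have -> : k = (size X).+1 by lia. by rewrite eqxx.
- rewrite !count_cat /=; lia.
Qed.

Lemma take_at1 (X Y : config) p q : take (size X).+1 (X ++ [:: p; q] ++ Y) = X ++ [:: p].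
Proof. by rewrite take_cat ltnNge leqnSn /= subSnn. Qed.
Lemma take_at2 (X Y : config) p q : take (size X).+2 (X ++ [:: p; q] ++ Y) = X ++ [:: p; q].
Proof.
rewrite take_cat ltnNge (leq_trans (leqnSn _) (leqnSn _)) /=.
have -> : (size X).+2 - size X = 2 by lia. by rewrite /= take0.
Qed.

Lemma swap_inv n t (X Y : config) p q : (size X + n + t) %% 2 = 0 ->
  (forall i, i < n -> i < count_mem Black (take (kk n t i) (X ++ [:: p; q] ++ Y))) ->
  (forall i, i < n -> i < count_mem Black (take (kk n t i) (X ++ [:: q; p] ++ Y))).
Proof.
move=> hpar h i lin.
case e: (kk n t i == (size X).+1); last by rewrite -take_swap_count ?e //; apply: h.
move/eqP: e => e; rewrite e take_at1 count_cat /=.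
have h1 := h i lin; rewrite e take_at1 count_cat /= in h1.
have key : p = Black -> q != Black -> i < count_mem Black X.
  move=> pB qB; subst p.
  case: (leqP n (t + i.+1)) => ht.
  - exfalso; move: e hpar; rewrite /kk; lia.
  - have l2 : i.+1 < n by lia.
    have h2 := h i.+1 l2.
    have e2 : kk n t i.+1 = (size X).+2 by move: e; rewrite /kk; lia.
    rewrite e2 take_at2 count_cat /= in h2.
    rewrite /= in h1; clear h; case: q qB h2 => //= _ h2; lia.
clear h; case: p h1 key => /= h1 key; case: q key => /= key; try lia;
  have := key erefl isT; lia.
Qed.

Lemma count_take_mono (s : config) x k1 k2 : k1 <= k2 ->
  count_mem x (take k1 s) <= count_mem x (take k2 s).
Proof.
move=> h; rewrite -(subnKC h) takeD count_cat; exact: leq_addr.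
Qed.

Lemma index_free (X Z : config) : Empty \notin X -> index Empty (X ++ Z) = size X + index Empty Z.
Proof. by move=> h; rewrite index_cat (negbTE h). Qed.

Lemma str_cat (X Z : config) : str (X ++ Z) = str X ++ str Z.
Proof. exact: filter_cat. Qed.

Lemma kk_mono n t i : kk n t i <= kk n t.+1 i.
Proof. rewrite /kk; lia. Qed.

Lemma inv_step n t c mv : count_mem Empty c = 1 -> legal c mv -> Inv n t c ->
  Inv n (t + isslide mv) (apply_move c mv).
Proof.
move=> hc hl [hp hk]; case: (decomp hc hl) => [X Y a aE nX nY ec em | X Y a aE nX nY ec em
  | X Y a b aE bE nX nY ec em | X Y a b aE bE nX nY ec em]; subst c mv.
- have [_ ->] := slideR_ok X Y aE.
  have sl : isslide (Move (size X) (size X).+1) by rewrite /isslide /dist /=; apply/eqP; lia.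
  rewrite sl addn1; move: hp hk; rewrite /Inv !(index_free _ nX) /= (negbTE aE) /=.
  rewrite !str_cat (str_free nX) /= aE /= => hp hk; split; first lia.
  move=> i li; apply: (leq_trans (hk i li)); exact: count_take_mono (kk_mono _ _ _).
- have [_ ->] := slideL_ok X Y aE.
  have sl : isslide (Move (size X).+1 (size X)) by rewrite /isslide /dist /=; apply/eqP; lia.
  rewrite sl addn1; move: hp hk; rewrite /Inv !(index_free _ nX) /= (negbTE aE) /=.
  rewrite !str_cat (str_free nX) /= aE /= => hp hk; split; first lia.
  move=> i li; apply: (leq_trans (hk i li)); exact: count_take_mono (kk_mono _ _ _).
- have [_ ->] := jumpR_ok X Y aE bE.
  have sl : isslide (Move (size X) (size X).+2) = false by rewrite /isslide /dist /=; apply/eqP; lia.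
  rewrite sl addn0; move: hp hk; rewrite /Inv !(index_free _ nX) /= (negbTE aE) (negbTE bE) /=.
  rewrite !str_cat (str_free nX) /= aE bE /= => hp hk; split; first lia.
  have hp' : (size X + n + t) %% 2 = 0.
    have e : size X + n + t + 2 = size X + 2 + n + t by lia.
    by rewrite -(modnDr (size X + n + t) 2) e.
  exact: (swap_inv hp' hk).
- have [_ ->] := jumpL_ok X Y aE bE.
  have sl : isslide (Move (size X).+2 (size X)) = false by rewrite /isslide /dist /=; apply/eqP; lia.
  rewrite sl addn0; move: hp hk; rewrite /Inv !(index_free _ nX) /= (negbTE aE) (negbTE bE) /=.
  rewrite !str_cat (str_free nX) /= aE bE /= => hp hk; split; first lia.
  have hp' : (size X + n + t) %% 2 = 0 by move: hp; rewrite addn0.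
  exact: (swap_inv hp' hk).
Qed.

Fixpoint nna (c : config) (ms : seq move) : nat :=
  if ms is mv :: ms' then ~~ allowedb c mv + nna (apply_move c mv) ms' else 0.

Lemma run_ineq c ms c' : count_mem Empty c = 1 -> runs c ms c' ->
  4 * invc c + xi c + 3 * count isslide ms + nna c ms <= 4 * size ms + 4 * invc c' + xi c'.
Proof.
elim: ms c => [|mv ms IH] c hc /=; first by move=> ->; lia.
case=> hl hr; have [hcnt hineq _] := step_facts hc hl.
have hc' : count_mem Empty (apply_move c mv) = 1 by rewrite hcnt.
have := IH _ hc' hr; lia.
Qed.

Lemma run_inv n t c ms c' : count_mem Empty c = 1 -> runs c ms c' -> Inv n t c ->
  Inv n (t + count isslide ms) c'.
Proof.
elim: ms t c => [|mv ms IH] t c hc /=; first by move=> -> ; rewrite addn0.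
case=> hl hr hi; have [hcnt _ _] := step_facts hc hl.
have hc' : count_mem Empty (apply_move c mv) = 1 by rewrite hcnt.
have := IH _ _ hc' hr (inv_step hc hl hi); by rewrite addnA.
Qed.

Lemma nna0 c ms : nna c ms = 0 -> all_allowed c ms.
Proof.
elim: ms c => [|mv ms IH] c //= h; split; last by apply: IH; lia.
apply: allowedbP; move: h; case: (allowedb c mv) => //=.
Qed.

Lemma invc_nseqB k : invc (nseq k Black) = 0.
Proof. by elim: k => //= k ->; rewrite count_nseq. Qed.
Lemma invc_nseqW k : invc (nseq k White) = 0.
Proof. by elim: k => //= k ->. Qed.
Lemma notE_nseq k x : x != Empty -> Empty \notin nseq k x.
Proof. by move=> h; rewrite mem_nseq negb_and eq_sym h orbT. Qed.

Lemma init_facts n m :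
  [/\ count_mem Empty (init_config n m) = 1, invc (init_config n m) = n * m &
      xi (init_config n m) = n + m].
Proof.
rewrite /init_config; split.
- by rewrite count_cat /= !count_nseq /=; lia.
- rewrite invc_cat invc_nseqB /= invc_nseqW !count_nseq /=; lia.
- by rewrite xi_cat ?notE_nseq //= !count_nseq /=; lia.
Qed.

Lemma fin_facts n m : invc (final_config n m) = 0 /\ xi (final_config n m) = 0.
Proof.
rewrite /final_config; split.
- by rewrite invc_cat invc_nseqW /= invc_nseqB !count_nseq /= mul0n.
- by rewrite xi_cat ?notE_nseq //= !count_nseq /=.
Qed.

Lemma str_nseq k x : x != Empty -> str (nseq k x) = nseq k x.
Proof. by move=> h; apply: str_free; apply: notE_nseq. Qed.

Lemma inv_init n m : Inv n 0 (init_config n m).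
Proof.
rewrite /Inv /init_config index_free ?notE_nseq //= size_nseq; split.
  have -> : n + 0 + n + 0 = n * 2 by lia.
  by rewrite modnMl.
move=> i li; rewrite str_cat str_nseq //= str_nseq // /kk.
have -> : 0 + i.+1 - n = 0 by lia.
rewrite addn0 take_cat size_nseq; case: ifP => h.
- by rewrite take_nseq; [rewrite count_nseq /=; lia | lia].
- have -> : i.+1 = n by lia. by rewrite subnn take0 cats0 count_nseq /=; lia.
Qed.

Lemma cntB k m n : 0 < count_mem Black (take k (nseq m White ++ nseq n Black)) -> m < k.
Proof.
case: (ltnP m k) => // h.
rewrite takel_cat ?size_nseq // take_nseq //.
by rewrite count_nseq.
Qed.

Lemma inv_fin n m S : 0 < n -> 0 < m -> Inv n S (final_config n m) -> n + m <= S.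
Proof.
move=> hn hm [hp hk]; move: hp (hk 0 hn).
rewrite /final_config index_free ?notE_nseq //= size_nseq str_cat str_nseq //= str_nseq // /kk.
move=> hp /cntB hc.
case: (ltnP S (n + m)) => // hS. exfalso.
have eS : S = n + m - 1 by lia.
move: hp; rewrite eS; have -> : m + 0 + n + (n + m - 1) = (n + m - 1) * 2 + 1 by lia.
by rewrite modnMDl.
Qed.

Definition gform a c0 i j d e (fl : bool) : config :=
  nseq a White ++ nseq c0 Black ++ (if fl then alt White Black i else alt Black White i) ++
  Empty :: (if fl then alt Black White j else alt White Black j) ++ nseq d White ++ nseq e Black.

Definition G (c : config) := exists a c0 i j d e fl, c = gform a c0 i j d e fl.

Definition fin_of (c : config) : config :=
  nseq (count_mem White c) White ++ Empty :: nseq (count_mem Black c) Black.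

Lemma mk_step c X Y L L' mv c' : c = X ++ L ++ Y ->
  legal (X ++ L ++ Y) mv /\ apply_move (X ++ L ++ Y) mv = X ++ L' ++ Y ->
  allowedb (X ++ L ++ Y) mv -> X ++ L' ++ Y = c' -> G c' ->
  exists mv, [/\ legal c mv, allowedb c mv & G (apply_move c mv)].
Proof. move=> -> [hl ha] hb e g; exists mv; split => //; by rewrite ha e. Qed.

Lemma alt_l5 x y j : x :: alt y x j = alt x y j ++ [:: x].
Proof. by rewrite alt_r1. Qed.

Lemma fin_gform a e fl : gform a 0 0 0 0 e fl = fin_of (gform a 0 0 0 0 e fl).
Proof.
rewrite /fin_of /gform; case: fl => /=; rewrite !count_cat !count_nseq /= !count_nseq /= !mul0n !mul1n !add0n !addn0 //.
Qed.

Lemma nseq_swap (x : cell) a s : nseq a x ++ x :: s = x :: nseq a x ++ s.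
Proof. by elim: a => //= a ->. Qed.
Lemma alt_swap1 x y i s : alt x y i ++ x :: s = x :: alt y x i ++ s.
Proof. by elim: i x y => //= i IH x y; rewrite IH. Qed.

Ltac lnorm := rewrite /gform; do 6! (rewrite -?catA /= ?nseq_swap ?alt_swap1).

Lemma G_step c : G c -> c <> fin_of c ->
  exists mv, [/\ legal c mv, allowedb c mv & G (apply_move c mv)].
Proof.
move=> [a [c0 [i [j [d [e [fl ->]]]]]]] hne.
case: fl hne => hne.
- case: j hne => [|j] hne.
  + case: d hne => [|d] hne.
    * case: i hne => [|i] hne.
      -- case: c0 hne => [|c0] hne.
         ++ by exfalso; apply: hne; rewrite -fin_gform.
         ++ apply: (mk_step (X := nseq a White ++ nseq c0 Black) (Y := nseq e Black)
              _ (@slideR_ok _ _ Black isT) (ab_SR _ _) (c' := gform a c0 0 0 0 e.+1 true)).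
            ** by lnorm.
            ** by lnorm.
            ** by exists a, c0, 0, 0, 0, e.+1, true.
      -- case: c0 hne => [|c0] hne.
         ++ apply: (mk_step (X := nseq a White ++ alt White Black i ++ [:: White]) (Y := nseq e Black)
              _ (@slideR_ok _ _ Black isT) (ab_SR _ _) (c' := gform a.+1 0 i 0 0 e.+1 false)).
            ** by lnorm.
            ** by lnorm.
            ** by exists a.+1, 0, i, 0, 0, e.+1, false.
         ++ apply: (mk_step (X := nseq a White ++ nseq c0.+1 Black ++ alt White Black i ++ [:: White])
              (Y := nseq e Black)
              _ (@slideR_ok _ _ Black isT) (ab_SR _ _) (c' := gform a c0 i.+1 0 0 e.+1 false)).
            ** by lnorm.
            ** by lnorm.
            ** by exists a, c0, i.+1, 0, 0, e.+1, false.
    * case: c0 hne => [|c0] hne.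
      -- apply: (mk_step (X := nseq a White ++ alt White Black i) (Y := nseq d White ++ nseq e Black)
              _ (@slideL_ok _ _ White isT) (ab_SL _ _) (c' := gform a.+1 0 i 0 d e false)).
         ** by lnorm.
         ** by lnorm.
         ** by exists a.+1, 0, i, 0, d, e, false.
      -- apply: (mk_step (X := nseq a White ++ nseq c0.+1 Black ++ alt White Black i)
              (Y := nseq d White ++ nseq e Black)
              _ (@slideL_ok _ _ White isT) (ab_SL _ _) (c' := gform a c0 i.+1 0 d e false)).
         ** by lnorm.
         ** by lnorm.
         ** by exists a, c0, i.+1, 0, d, e, false.
  + apply: (mk_step (X := nseq a White ++ nseq c0 Black ++ alt White Black i)
              (Y := alt Black White j ++ nseq d White ++ nseq e Black)
              _ (@jumpL_ok _ _ White Black isT isT) (ab_JL _ _) (c' := gform a c0 i.+1 j d e true)).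
    * by lnorm.
    * by lnorm.
    * by exists a, c0, i.+1, j, d, e, true.
- case: i hne => [|i] hne.
  + case: c0 hne => [|c0] hne.
    * case: j hne => [|j] hne.
      -- case: d hne => [|d] hne.
         ++ by exfalso; apply: hne; rewrite -fin_gform.
         ++ apply: (mk_step (X := nseq a White) (Y := nseq d White ++ nseq e Black)
              _ (@slideL_ok _ _ White isT) (ab_SL _ _) (c' := gform a.+1 0 0 0 d e false)).
            ** by lnorm.
            ** by lnorm.
            ** by exists a.+1, 0, 0, 0, d, e, false.
      -- case: d hne => [|d] hne.
         ++ apply: (mk_step (X := nseq a White) (Y := Black :: alt White Black j ++ nseq 0 White ++ nseq e Black)
              _ (@slideL_ok _ _ White isT) (ab_SL _ _) (c' := gform a.+1 0 0 j 0 e.+1 true)).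
            ** by lnorm.
            ** by lnorm.
            ** by exists a.+1, 0, 0, j, 0, e.+1, true.
         ++ apply: (mk_step (X := nseq a White) (Y := Black :: alt White Black j ++ nseq d.+1 White ++ nseq e Black)
              _ (@slideL_ok _ _ White isT) (ab_SL _ _) (c' := gform a.+1 0 0 j.+1 d e true)).
            ** by lnorm.
            ** by lnorm.
            ** by exists a.+1, 0, 0, j.+1, d, e, true.
    * case: d hne => [|d] hne.
      -- apply: (mk_step (X := nseq a White ++ nseq c0 Black) (Y := alt White Black j ++ nseq 0 White ++ nseq e Black)
              _ (@slideR_ok _ _ Black isT) (ab_SR _ _) (c' := gform a c0 0 j 0 e.+1 true)).
         ** by lnorm.
         ** by lnorm.
         ** by exists a, c0, 0, j, 0, e.+1, true.
      -- apply: (mk_step (X := nseq a White ++ nseq c0 Black) (Y := alt White Black j ++ nseq d.+1 White ++ nseq e Black)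
              _ (@slideR_ok _ _ Black isT) (ab_SR _ _) (c' := gform a c0 0 j.+1 d e true)).
         ** by lnorm.
         ** by lnorm.
         ** by exists a, c0, 0, j.+1, d, e, true.
  + apply: (mk_step (X := nseq a White ++ nseq c0 Black ++ alt Black White i)
              (Y := alt White Black j ++ nseq d White ++ nseq e Black)
              _ (@jumpR_ok _ _ Black White isT isT) (ab_JR _ _) (c' := gform a c0 i j.+1 d e false)).
    * by lnorm.
    * by lnorm.
    * by exists a, c0, i, j.+1, d, e, false.
Qed.

Lemma alt_noE x y i : x != Empty -> y != Empty -> count_mem Empty (alt x y i) = 0.
Proof.
move=> hx hy; elim: i => //= i ->.
by rewrite (negbTE hx) (negbTE hy).
Qed.

Lemma G_one c : G c -> count_mem Empty c = 1.
Proof.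
move=> [a [c0 [i [j [d [e [fl ->]]]]]]]; rewrite /gform !count_cat /= !count_cat !count_nseq /=.
by case: fl; rewrite !alt_noE.
Qed.

Lemma Q_fin c : invc (fin_of c) + xi (fin_of c) = 0.
Proof. have [-> ->] := fin_facts (count_mem Black c) (count_mem White c). by []. Qed.

Lemma exists_path k c : G c -> invc c + xi c = k ->
  exists ms, runs c ms (fin_of c) /\ size ms = k.
Proof.
elim: k c => [|k IH] c gc hq.
- case: (c =P fin_of c) => [e|ne]; first by exists [::].
  have [mv [hl hb _]] := G_step gc ne.
  have [_ _ hQ] := step_facts (G_one gc) hl.
  have := hQ hb; lia.
- case: (c =P fin_of c) => [e|ne].
  + by move: hq; rewrite e Q_fin.
  have [mv [hl hb gc']] := G_step gc ne.
  have [hcnt _ hQ] := step_facts (G_one gc) hl.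
  have hq' : invc (apply_move c mv) + xi (apply_move c mv) = k by have := hQ hb; lia.
  have [ms [hr hs]] := IH _ gc' hq'.
  exists (mv :: ms); split; last by rewrite /= hs.
  split => //.
  by have -> : fin_of c = fin_of (apply_move c mv) by rewrite /fin_of !hcnt.
Qed.

Unset Implicit Arguments.

Theorem lemma1 (n m : nat) (ms : seq move) :
  1 <= n -> 1 <= m -> optimal_solution n m ms ->
  all_allowed (init_config n m) ms.
Proof.
move=> hn hm [hsol hopt].
have [hc1 hinv hxi] := init_facts n m.
have [hfinv hfxi] := fin_facts n m.
have gi : G (init_config n m).
  by exists 0, n, 0, 0, m, 0, true; rewrite /gform /init_config /= cats0.
have finE : fin_of (init_config n m) = final_config n m.
  rewrite /fin_of /final_config /init_config !count_cat /= !count_nseq /=.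
  by congr (nseq _ _ ++ Empty :: nseq _ _); lia.
have [ms0 [hr0 hs0]] := exists_path gi (erefl _).
rewrite finE in hr0.
have hle := hopt ms0 hr0.
have hI := run_ineq hc1 hsol.
have hS := inv_fin hn hm (run_inv hc1 hsol (inv_init n m)).
rewrite add0n in hS.
apply: nna0.
move: hI hle; rewrite hs0 hinv hxi hfinv hfxi; lia.
Qed.
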